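(* (1) For every $t\ge7$, $\mathfrak{e}^E_t\in\mathcal{E}(\mathcal{P}^{s+}_{3,5})$. (2) If $t\ge7$ and $f\in\mathcal{P}^{s+}_{3,5}$ satisfies $f(t,1,1)=f(0,1,1)=f(0,0,1)=0$, then $f=\lambda\mathfrak{e}^E_t$ for some $\lambda\ge0$. (3) $\mathfrak{e}^E_\infty=s_4\in\mathcal{E}(\mathcal{P}^{s+}_{3,5})$. (4) If $f\in\mathcal{P}^{s+}_{3,5}$ satisfies $f(0,1,1)=f(0,0,1)=f_a(0,0,1)=f_{ab}(0,0,1)=0$, then $f=\lambda s_4$ for some $\lambda\ge0$.
   Context: Let $a,b,c$ be variables. For nonnegative integers $m,n$ put $S_{m,n}=a^mb^n+b^mc^n+c^ma^n$, $S_n=S_{n,0}=a^n+b^n+c^n$, $T_{m,n}=S_{m,n}+S_{n,m}$, $U=abc$ (so $S_{1,1}=ab+bc+ca$). Let $\mathcal{H}^s_{3,5}$ be the real vector space of symmetric homogeneous polynomials of degree 5 in $\mathbb{R}[a,b,c]$; it has basis $s_0=S_5-US_{1,1}$, $s_1=T_{4,1}-2US_{1,1}$, $s_2=T_{3,2}-2US_{1,1}$, $s_3=US_2-US_{1,1}$, $s_4=US_{1,1}$. Let $\mathcal{P}^{s+}_{3,5}=\{f\in\mathcal{H}^s_{3,5}: f(a,b,c)\ge 0\text{ for all }a,b,c\ge0\}$. For a closed convex cone $\mathcal{P}$, an element $f\in\mathcal{P}\setminus\{0\}$ is extremal if whenever $f=g+h$ with $g,h\in\mathcal{P}$ we have $g,h\in\mathbb{R}_{\ge0}f$;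 $\mathcal{E}(\mathcal{P})$ is the set of extremal elements. Subscripts denote partial derivatives: $f_a=\partial f/\partial a$, $f_{ab}=\partial^2f/\partial a\partial b$. Family E: $\mathfrak{e}^E_t=s_1-s_2-\frac{4t^2+5t+3}{t+2}s_3+\frac{(t-1)^3}{t+2}s_4$, and $\mathfrak{e}^E_\infty=s_4$. *)

(* Defs.v *)
From HB Require Import structures.
From mathcomp Require Import all_boot all_order all_algebra.
From mathcomp Require Import reals.
From mathcomp Require Import mpoly.
Set Implicit Arguments. Unset Strict Implicit. Unset Printing Implicit Defensive.
Import Order.TTheory GRing.Theory Num.Theory.
Local Open Scope ring_scope.

Section Defs.
Variable R : realType.

Definition va : {mpoly R[3]} := 'X_(@Ordinal 3 0 isT).
Definition vb : {mpoly R[3]} := 'X_(@Ordinal 3 1 isT).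
Definition vc : {mpoly R[3]} := 'X_(@Ordinal 3 2 isT).

Definition ia : 'I_3 := @Ordinal 3 0 isT.
Definition ib : 'I_3 := @Ordinal 3 1 isT.

Definition Smn (m n : nat) : {mpoly R[3]} :=
  va ^+ m * vb ^+ n + vb ^+ m * vc ^+ n + vc ^+ m * va ^+ n.
Definition Sn (n : nat) : {mpoly R[3]} := Smn n 0.
Definition Tmn (m n : nat) : {mpoly R[3]} := Smn m n + Smn n m.
Definition U : {mpoly R[3]} := va * vb * vc.

Definition s0 : {mpoly R[3]} := Sn 5 - U * Smn 1 1.
Definition s1 : {mpoly R[3]} := Tmn 4 1 - 2%:R *: (U * Smn 1 1).
Definition s2 : {mpoly R[3]} := Tmn 3 2 - 2%:R *: (U * Smn 1 1).
Definition s3 : {mpoly R[3]} := U * Sn 2 - U * Smn 1 1.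
Definition s4 : {mpoly R[3]} := U * Smn 1 1.

Definition eE (t : R) : {mpoly R[3]} :=
  s1 - s2 - ((4%:R * t ^+ 2 + 5%:R * t + 3%:R) / (t + 2%:R)) *: s3
     + ((t - 1) ^+ 3 / (t + 2%:R)) *: s4.
Definition eE_inf : {mpoly R[3]} := s4.

Definition Hs35 (f : {mpoly R[3]}) : Prop :=
  f \is symmetric /\ f \is 5.-homog.

Definition pt3 (x y z : R) : 'I_3 -> R := fun i => nth 0 [:: x; y; z] i.

Definition Ps35plus (f : {mpoly R[3]}) : Prop :=
  Hs35 f /\ forall x : 'I_3 -> R, (forall i, 0 <= x i) -> 0 <= f.@[x].

Definition extremal (P : {mpoly R[3]} -> Prop) (f : {mpoly R[3]}) : Prop :=
  [/\ P f, f <> 0 &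
    forall g h, P g -> P h -> f = g + h ->
      (exists l : R, 0 <= l /\ g = l *: f) /\ (exists l : R, 0 <= l /\ h = l *: f)].

End Defs.

(* Main.v *)
Require Import Defs.
From HB Require Import structures.
From mathcomp Require Import all_boot all_order all_algebra.
From mathcomp Require Import reals.
From mathcomp Require Import mpoly.
From mathcomp Require Import fingroup perm.
From mathcomp Require Import ring lra zify.
Set Implicit Arguments. Unset Strict Implicit.
Import Order.TTheory GRing.Theory Num.Theory.
Local Open Scope ring_scope.

Section Real.
Variable R : realType.
Implicit Types (t a b c p q r x y : R).

Definition Fp t p q r := (t + 2%:R) * p * q * (p ^+ 2 - 4%:R * q)
  + r * ((t + 2%:R) ^+ 2 * (t + 5%:R) * q - (2%:R * t + 1) ^+ 2 * p ^+ 2).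

Lemma Fxy t x y : Fp t (x + 2%:R * y) (2%:R * x * y + y ^+ 2) (x * y ^+ 2) =
  x * y * (x - t * y) ^+ 2 * (2%:R * (t + 2%:R) * x + (t - 7%:R) * y).
Proof. rewrite /Fp; ring. Qed.

Lemma Fxy_ge0 t x y : 7%:R <= t -> 0 <= x -> 0 <= y ->
  0 <= Fp t (x + 2%:R * y) (2%:R * x * y + y ^+ 2) (x * y ^+ 2).
Proof.
move=> ht hx hy; rewrite Fxy.
have h : 0 <= 2%:R * (t + 2%:R) * x + (t - 7%:R) * y by nra.
apply: mulr_ge0 => //; apply: mulr_ge0; [exact: mulr_ge0|exact: sqr_ge0].
Qed.

Lemma sqrt_le_aux (s k : R) : 0 <= s -> 0 <= k -> s ^+ 2 <= k ^+ 2 -> s <= k.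
Proof. move=> hs hk h; nra. Qed.

Lemma Fsorted t a b c : 7%:R <= t -> 0 <= a -> a <= b -> b <= c ->
  0 <= Fp t (a + b + c) (a * b + b * c + c * a) (a * b * c).
Proof.
move=> ht ha hab hbc.
set p := a + b + c; set q := a * b + b * c + c * a; set r := a * b * c.
have D0 : 0 <= p ^+ 2 - 3%:R * q by rewrite /p /q; nra.
set s := Num.sqrt (p ^+ 2 - 3%:R * q).
have s0 : 0 <= s := sqrtr_ge0 _.
have ss : s ^+ 2 = p ^+ 2 - 3%:R * q by rewrite sqr_sqrtr.
pose y1 := (p - s) / 3%:R; pose x1 := p - 2%:R * y1.
pose y2 := (p + s) / 3%:R; pose x2 := p - 2%:R * y2.
have h1 : s <= b + c - 2%:R * a.
  apply: sqrt_le_aux => //; first lra.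
  by rewrite ss /p /q; nra.
have h2 : a + c - 2%:R * b <= s.
  case: (lerP (a + c - 2%:R * b) 0) => hh; first lra.
  apply: sqrt_le_aux => //; first lra.
  by rewrite ss /p /q; nra.
have h3 : 2%:R * b - a - c <= s.
  case: (lerP (2%:R * b - a - c) 0) => hh; first lra.
  apply: sqrt_le_aux => //; first lra.
  by rewrite ss /p /q; nra.
have h4 : s <= 2%:R * c - a - b.
  apply: sqrt_le_aux => //; first lra.
  by rewrite ss /p /q; nra.
have ay1 : a <= y1 by rewrite /y1 /p; lra.
have y1b : y1 <= b by rewrite /y1 /p; lra.
have by2 : b <= y2 by rewrite /y2 /p; lra.
have y2c : y2 <= c by rewrite /y2 /p; lra.
have crit1 : 3%:R * y1 ^+ 2 - 2%:R * p * y1 + q = 0.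
  rewrite /y1; apply/eqP; rewrite -subr_eq0; apply/eqP.
  by rewrite (_ : q = (p ^+ 2 - s ^+ 2) / 3%:R); [field|rewrite ss; field].
have crit2 : 3%:R * y2 ^+ 2 - 2%:R * p * y2 + q = 0.
  rewrite /y2; apply/eqP; rewrite -subr_eq0; apply/eqP.
  by rewrite (_ : q = (p ^+ 2 - s ^+ 2) / 3%:R); [field|rewrite ss; field].
have r1 : r <= x1 * y1 ^+ 2.
  have E : x1 * y1 ^+ 2 - r = (y1 - a) * (b - y1) * (c - y1)
      - y1 * (3%:R * y1 ^+ 2 - 2%:R * p * y1 + q).
    by rewrite /x1 /p /q /r; ring.
  rewrite crit1 mulr0 subr0 in E.
  have : 0 <= (y1 - a) * (b - y1) * (c - y1).
    by rewrite !mulr_ge0 // subr_ge0 // (le_trans y1b).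
  by rewrite -E subr_ge0.
have r2 : x2 * y2 ^+ 2 <= r.
  have E : r - x2 * y2 ^+ 2 = (y2 - a) * (y2 - b) * (c - y2)
      + y2 * (3%:R * y2 ^+ 2 - 2%:R * p * y2 + q).
    by rewrite /x2 /p /q /r; ring.
  rewrite crit2 mulr0 addr0 in E.
  have : 0 <= (y2 - a) * (y2 - b) * (c - y2).
    by rewrite !mulr_ge0 // subr_ge0 // (le_trans hab).
  by rewrite -E subr_ge0.
have Eq1 : q = 2%:R * x1 * y1 + y1 ^+ 2.
  by apply/eqP; rewrite -subr_eq0 -crit1 /x1; apply/eqP; ring.
have Eq2 : q = 2%:R * x2 * y2 + y2 ^+ 2.
  by apply/eqP; rewrite -subr_eq0 -crit2 /x2; apply/eqP; ring.
have Ep1 : p = x1 + 2%:R * y1 by rewrite /x1; ring.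
have Ep2 : p = x2 + 2%:R * y2 by rewrite /x2; ring.
have Flin : forall r', Fp t p q r = Fp t p q r' +
    (r - r') * ((t + 2%:R) ^+ 2 * (t + 5%:R) * q - (2%:R * t + 1) ^+ 2 * p ^+ 2).
  by move=> r'; rewrite /Fp; ring.
have hb0 : 0 <= b by lra.
have hc0 : 0 <= c by lra.
have p0 : 0 <= p by rewrite /p; lra.
have q0 : 0 <= q by rewrite /q !addr_ge0 ?mulr_ge0.
have r0 : 0 <= r by rewrite /r !mulr_ge0.
set C := (t + 2%:R) ^+ 2 * (t + 5%:R) * q - (2%:R * t + 1) ^+ 2 * p ^+ 2.
case: (ltrP C 0) => hC.
  rewrite (Flin (x1 * y1 ^+ 2)) -/C.
  have h : 0 <= (r - x1 * y1 ^+ 2) * C by nra.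
  have : 0 <= Fp t p q (x1 * y1 ^+ 2).
    rewrite {1}Ep1 {1}Eq1; apply: Fxy_ge0 => //.
    - by rewrite /x1 /y1; lra.
    - lra.
  lra.
case: (lerP 0 x2) => hx2.
  rewrite (Flin (x2 * y2 ^+ 2)) -/C.
  have h : 0 <= (r - x2 * y2 ^+ 2) * C by nra.
  have : 0 <= Fp t p q (x2 * y2 ^+ 2).
    rewrite {1}Ep2 {1}Eq2; apply: Fxy_ge0 => //.
    by rewrite /y2; lra.
  lra.
have h4q : 4%:R * q <= p ^+ 2.
  have : p < 2%:R * s by move: hx2; rewrite /x2 /y2; lra.
  nra.
rewrite /Fp.
have h1' : 0 <= (t + 2%:R) * p * q * (p ^+ 2 - 4%:R * q).
  by rewrite !mulr_ge0 // ?subr_ge0 //; lra.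
have h2' : 0 <= r * C by rewrite mulr_ge0.
rewrite -/C; lra.
Qed.

Definition G t a b c := Fp t (a + b + c) (a * b + b * c + c * a) (a * b * c).

Lemma G01 t a b c : G t a b c = G t b a c.
Proof. by rewrite /G; congr Fp; ring. Qed.
Lemma G12 t a b c : G t a b c = G t a c b.
Proof. by rewrite /G; congr Fp; ring. Qed.

Lemma Fnonneg t a b c : 7%:R <= t -> 0 <= a -> 0 <= b -> 0 <= c -> 0 <= G t a b c.
Proof.
move=> ht ha hb hc.
case: (lerP a b) => hab; case: (lerP b c) => hbc; case: (lerP a c) => hac.
- by apply: Fsorted.
- by apply: Fsorted.
- by rewrite G12; apply: Fsorted => //; lra.
- by rewrite G12 G01; apply: Fsorted => //; lra.
- by rewrite G01; apply: Fsorted => //; lra.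
- by rewrite G01 G12; apply: Fsorted => //; lra.
- lra.
- by rewrite G01 G12 G01; apply: Fsorted => //; lra.
Qed.

Lemma dzero (D E F : R) :
  (forall h, -1 <= h -> h <= 1 -> 0 <= D * h + E * h ^+ 2 + F * h ^+ 3) -> D = 0.
Proof.
move=> H.
pose M := `|E| + `|F| + 1.
have M0 : 0 < M by rewrite /M; have := normr_ge0 E; have := normr_ge0 F; lra.
pose d := `|D| / (`|D| + 2%:R * M).
have d0 : 0 <= d by rewrite /d divr_ge0 // addr_ge0 // ?normr_ge0 //; lra.
have d1 : d * (`|D| + 2%:R * M) = `|D|.
  by rewrite /d mulfVK //; have := normr_ge0 D; lra.
have dle : d <= 1.
  rewrite /d ler_pdivrMr; first by rewrite mul1r; lra.
  by have := normr_ge0 D; lra.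
have bE : forall h, `|h| <= d -> `|E * h ^+ 2 + F * h ^+ 3| <= M * d ^+ 2.
  move=> h hh.
  have hd : `|h| <= 1 by lra.
  have : `|E * h ^+ 2| <= `|E| * d ^+ 2.
    rewrite normrM normrX ler_wpM2l ?normr_ge0 //.
    by rewrite lerXn2r ?nnegrE ?normr_ge0.
  have : `|F * h ^+ 3| <= `|F| * d ^+ 2.
    rewrite normrM normrX ler_wpM2l ?normr_ge0 // exprS.
    have : `|h| ^+ 2 <= d ^+ 2 by rewrite lerXn2r ?nnegrE ?normr_ge0.
    have := normr_ge0 h; have := sqr_ge0 `|h|; nra.
  have := ler_normD (E * h ^+ 2) (F * h ^+ 3).
  rewrite /M; have := sqr_ge0 d; nra.
case: (ltrgtP D 0) => // hD.
- have := H d; have := bE d; rewrite ger0_norm // => hb hh.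
  have := hh (ltac:(lra)) dle; have := hb (lexx _).
  rewrite ltr0_norm // in d1.
  move=> h1 h2; have := ler_norm (E * d ^+ 2 + F * d ^+ 3).
  have := normr_ge0 (E * d ^+ 2 + F * d ^+ 3).
  have : 0 < d by rewrite /d divr_gt0 //; [rewrite normr_gt0; apply/negP => /eqP E0; lra | rewrite ltr0_norm //; lra].
  nra.
- have := H (- d); have := bE (- d); rewrite normrN ger0_norm // => hb hh.
  have := hh (ltac:(lra)) (ltac:(lra)); have := hb (lexx _).
  rewrite gtr0_norm // in d1.
  move=> h1 h2; have := ler_norm (E * (- d) ^+ 2 + F * (- d) ^+ 3).
  have : 0 < d by rewrite /d divr_gt0 // ?normr_gt0 ?gtr0_norm //; [apply/negP => /eqP E0; lra | lra].
  nra.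
Qed.

Lemma pos0 (k3 k4 : R) :
  (forall x, 0 < x -> x <= 1 ->
     0 <= k3 * (2%:R * x ^+ 4 + x ^+ 2) + k4 * (x ^+ 4 + 2%:R * x ^+ 3)) -> 0 <= k3.
Proof.
move=> H; case: (lerP 0 k3) => // hk.
pose N := `|k4| + 1.
have N0 : 0 < N by rewrite /N; have := normr_ge0 k4; lra.
pose x := (- k3) / (- k3 + 6%:R * N).
have den0 : 0 < - k3 + 6%:R * N by lra.
have x0 : 0 < x by rewrite /x divr_gt0 //; lra.
have xd : x * (- k3 + 6%:R * N) = - k3 by rewrite /x mulfVK //; lra.
have x1 : x <= 1 by rewrite /x ler_pdivrMr // mul1r; lra.
have := H x x0 x1.
have e1 : k3 * (2%:R * x ^+ 4 + x ^+ 2) <= k3 * x ^+ 2.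
  have : 0 <= x ^+ 4 by rewrite exprn_ge0 //; lra.
  nra.
have e2 : k4 * (x ^+ 4 + 2%:R * x ^+ 3) <= `|k4| * (3%:R * x ^+ 3).
  have hx4 : x ^+ 4 <= x ^+ 3 by rewrite exprS -[X in _ <= X]mul1r ler_wpM2r ?exprn_ge0 //; lra.
  have hx3 : 0 <= x ^+ 3 by rewrite exprn_ge0 //; lra.
  have := ler_norm k4; have := normr_ge0 k4.
  have : k4 * (x ^+ 4 + 2%:R * x ^+ 3) <= `|k4| * (x ^+ 4 + 2%:R * x ^+ 3).
    have : 0 <= x ^+ 4 by rewrite exprn_ge0 //; lra.
    by move=> h4; apply: ler_wpM2r; [lra | exact: ler_norm].
  nra.
have e3 : `|k4| * (3%:R * x ^+ 3) <= - k3 / 2%:R * x ^+ 2.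
  have : `|k4| * (6%:R * x) <= - k3.
    have := normr_ge0 k4; rewrite -xd /N; nra.
  have hx2 : 0 <= x ^+ 2 by rewrite exprn_ge0 //; lra.
  rewrite (_ : x ^+ 3 = x * x ^+ 2); last by rewrite exprS.
  nra.
have : 0 < x ^+ 2 by rewrite exprn_gt0.
nra.
Qed.
End Real.

Ltac synrefl := match goal with |- ?x = ?x => reflexivity end.

Section Aux.
Variable R : realType.
Local Notation va := (va R).
Local Notation vb := (vb R).
Local Notation vc := (vc R).
Definition ic : 'I_3 := @Ordinal 3 2 isT.

Definition mk3 (a b c : nat) : 'X_{1..3} :=
  (U_(ia) *+ a + U_(ib) *+ b + U_(ic) *+ c)%MM.

Lemma mk3a a b c : mk3 a b c ia = a.
Proof. rewrite /mk3 !mnmDE !mulmnE !mnm1E /=; lia. Qed.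
Lemma mk3b a b c : mk3 a b c ib = b.
Proof. rewrite /mk3 !mnmDE !mulmnE !mnm1E /=; lia. Qed.
Lemma mk3c a b c : mk3 a b c ic = c.
Proof. rewrite /mk3 !mnmDE !mulmnE !mnm1E /=; lia. Qed.

Lemma ord3P (P : 'I_3 -> Prop) : P ia -> P ib -> P ic -> forall i, P i.
Proof.
move=> Pa Pb Pc [[|[|[|//]]] Hi].
- by rewrite (_ : Ordinal Hi = ia) //; apply/val_inj.
- by rewrite (_ : Ordinal Hi = ib) //; apply/val_inj.
- by rewrite (_ : Ordinal Hi = ic) //; apply/val_inj.
Qed.

Lemma mk3_comp (m : 'X_{1..3}) : m = mk3 (m ia) (m ib) (m ic).
Proof. by apply/mnmP; apply: ord3P; rewrite ?mk3a ?mk3b ?mk3c. Qed.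

Lemma mk3_eq a b c a' b' c' :
  (mk3 a b c == mk3 a' b' c') = [&& a == a', b == b' & c == c'].
Proof.
apply/idP/idP; last by case/and3P=> /eqP-> /eqP-> /eqP->.
move/eqP=> E.
apply/and3P; split; apply/eqP.
- by move: (congr1 (fun m : 'X_{1..3} => m ia) E); rewrite !mk3a.
- by move: (congr1 (fun m : 'X_{1..3} => m ib) E); rewrite !mk3b.
- by move: (congr1 (fun m : 'X_{1..3} => m ic) E); rewrite !mk3c.
Qed.

Definition mono (a b c : nat) : {mpoly R[3]} := va ^+ a * vb ^+ b * vc ^+ c.

Lemma monoE a b c : mono a b c = 'X_[mk3 a b c].
Proof. by rewrite /mono /mk3 !mpolyXD !mpolyXn. Qed.

Definition ind (a b c a' b' c' : nat) : R :=
  if [&& a == a', b == b' & c == c'] then 1 else 0.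

Lemma mono_coef a b c a' b' c' :
  (mono a' b' c')@_(mk3 a b c) = ind a b c a' b' c'.
Proof.
rewrite monoE mcoeffX mk3_eq /ind.
by case: (a' == a) (a == a') (eq_sym a a') => [] [] //= _;
  case: (b' == b) (b == b') (eq_sym b b') => [] [] //= _;
  case: (c' == c) (c == c') (eq_sym c c') => [] [] //=.
Qed.

Lemma ind_deg a b c a' b' c' : (a + b + c != a' + b' + c')%N ->
  ind a b c a' b' c' = 0.
Proof.
rewrite /ind; case: and3P => // [[/eqP-> /eqP-> /eqP->]].
by rewrite eqxx.
Qed.

Lemma ind_same a b c : ind a b c a b c = 1.
Proof. by rewrite /ind !eqxx. Qed.

Lemma ind_ne a b c a' b' c' : ~~ [&& a == a', b == b' & c == c'] ->
  ind a b c a' b' c' = 0.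
Proof. by rewrite /ind => /negbTE ->. Qed.

Lemma mono_eval a b c (x : 'I_3 -> R) :
  (mono a b c).@[x] = x ia ^+ a * x ib ^+ b * x ic ^+ c.
Proof. by rewrite /mono !mevalM !rmorphXn /= !mevalXU. Qed.

Lemma ord3_enum (T : Type) (F : 'I_3 -> T) :
  [:: F ord0; F (lift ord0 ord0); F (lift ord0 (lift ord0 ord0))] = [:: F ia; F ib; F ic].
Proof. by do !congr (_ :: _); congr F; apply/val_inj. Qed.

Lemma sum3n (F : 'I_3 -> nat) : (\sum_i F i = F ia + F ib + F ic)%N.
Proof.
rewrite !big_ord_recl big_ord0 addn0 addnA.
by have [-> -> ->] : [/\ F ord0 = F ia, F (lift ord0 ord0) = F ib & F (lift ord0 (lift ord0 ord0)) = F ic]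
  by split; congr F; apply/val_inj.
Qed.

Lemma mdeg_mk3 a b c : mdeg (mk3 a b c) = (a + b + c)%N.
Proof. by rewrite mdegE sum3n mk3a mk3b mk3c. Qed.

Lemma mono_homog a b c : mono a b c \is (a + b + c)%N.-homog.
Proof. by rewrite monoE dhomogX; apply/eqP; exact: mdeg_mk3. Qed.


Lemma tpE (x y z : 'I_3) : tperm x y z = if z == x then y else if z == y then x else z.
Proof. by rewrite permE. Qed.

Lemma cf01 (f : {mpoly R[3]}) a b c : f \is symmetric ->
  f@_(mk3 a b c) = f@_(mk3 b a c).
Proof.
move=> Hs.
have -> : mk3 b a c = [multinom (mk3 a b c) (tperm ia ib i) | i < 3].
  by apply/mnmP; apply: ord3P; rewrite mnmE tpE /= ?mk3a ?mk3b ?mk3c.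
by rewrite msym_coeff.
Qed.

Lemma cf12 (f : {mpoly R[3]}) a b c : f \is symmetric ->
  f@_(mk3 a b c) = f@_(mk3 a c b).
Proof.
move=> Hs.
have -> : mk3 a c b = [multinom (mk3 a b c) (tperm ib ic i) | i < 3].
  by apply/mnmP; apply: ord3P; rewrite mnmE tpE /= ?mk3a ?mk3b ?mk3c.
by rewrite msym_coeff.
Qed.

Definition P5 := mono 5%N 0%N 0%N + mono 0%N 5%N 0%N + mono 0%N 0%N 5%N.
Definition P41 := mono 4%N 1%N 0%N + mono 4%N 0%N 1%N + mono 1%N 4%N 0%N + mono 0%N 4%N 1%N + mono 1%N 0%N 4%N + mono 0%N 1%N 4%N.
Definition P32 := mono 3%N 2%N 0%N + mono 3%N 0%N 2%N + mono 2%N 3%N 0%N + mono 0%N 3%N 2%N + mono 2%N 0%N 3%N + mono 0%N 2%N 3%N.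
Definition P311 := mono 3%N 1%N 1%N + mono 1%N 3%N 1%N + mono 1%N 1%N 3%N.
Definition P221 := mono 2%N 2%N 1%N + mono 2%N 1%N 2%N + mono 1%N 2%N 2%N.

Lemma decomp_core (cf : nat -> nat -> nat -> R)
  (H01 : forall a b c, cf a b c = cf b a c)
  (H12 : forall a b c, cf a b c = cf a c b)
  (Hh : forall a b c, (a + b + c != 5)%N -> cf a b c = 0) a b c :
  cf a b c =
  cf 5%N 0%N 0%N * (ind a b c 5%N 0%N 0%N + ind a b c 0%N 5%N 0%N + ind a b c 0%N 0%N 5%N) +
  cf 4%N 1%N 0%N * (ind a b c 4%N 1%N 0%N + ind a b c 4%N 0%N 1%N + ind a b c 1%N 4%N 0%N + ind a b c 0%N 4%N 1%N +
              ind a b c 1%N 0%N 4%N + ind a b c 0%N 1%N 4%N) +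
  cf 3%N 2%N 0%N * (ind a b c 3%N 2%N 0%N + ind a b c 3%N 0%N 2%N + ind a b c 2%N 3%N 0%N + ind a b c 0%N 3%N 2%N +
              ind a b c 2%N 0%N 3%N + ind a b c 0%N 2%N 3%N) +
  cf 3%N 1%N 1%N * (ind a b c 3%N 1%N 1%N + ind a b c 1%N 3%N 1%N + ind a b c 1%N 1%N 3%N) +
  cf 2%N 2%N 1%N * (ind a b c 2%N 2%N 1%N + ind a b c 2%N 1%N 2%N + ind a b c 1%N 2%N 2%N).
Proof.
case: (boolP (a + b + c == 5)%N) => H; last first.
  by rewrite !ind_deg // !addr0 !mulr0 !addr0 Hh.
have Ha : (a <= 5)%N by lia. have Hb : (b <= 5)%N by lia. have Hc : (c <= 5)%N by lia.
case: a Ha H => [|[|[|[|[|[|a]]]]]] Ha H; try (exfalso; by move: Ha H);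
case: b Hb H => [|[|[|[|[|[|b]]]]]] Hb H; try (exfalso; by move: Hb H);
case: c Hc H => [|[|[|[|[|[|c]]]]]] Hc H; try (exfalso; by move: Hc H);
rewrite ?ind_same; rewrite ?ind_ne; try (match goal with |- is_true (~~ _) => done end);
rewrite ?(mulr0, mulr1, addr0, add0r);
first [ synrefl | rewrite [LHS]H01; synrefl | rewrite [LHS]H12; synrefl
      | rewrite [LHS]H01 [LHS]H12; synrefl
      | rewrite [LHS]H12 [LHS]H01; synrefl
      | rewrite [LHS]H01 [LHS]H12 [LHS]H01; synrefl ].
Qed.

Lemma decomp (f : {mpoly R[3]}) : Hs35 f ->
  f = f@_(mk3 5%N 0%N 0%N) *: P5 + f@_(mk3 4%N 1%N 0%N) *: P41 + f@_(mk3 3%N 2%N 0%N) *: P32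
      + f@_(mk3 3%N 1%N 1%N) *: P311 + f@_(mk3 2%N 2%N 1%N) *: P221.
Proof.
move=> [Hs Hh]; apply/mpolyP => m; rewrite (mk3_comp m).
move: (m ia) (m ib) (m ic) => a b c.
rewrite !mcoeffD !mcoeffZ /P5 /P41 /P32 /P311 /P221 !mcoeffD !mono_coef.
apply: (@decomp_core (fun a b c => f@_(mk3 a b c))) => {a b c} a b c.
- exact: cf01.
- exact: cf12.
- move=> H; apply: (dhomog_nemf_coeff Hh); change (mdeg (mk3 a b c) != 5%N).
  by rewrite mdeg_mk3.
Qed.

Lemma T41E : Tmn R 4 1 = P41 :> {mpoly R[3]}.
Proof. Time rewrite /Tmn /Smn /P41 /mono; ring. Qed.
Lemma T32E : Tmn R 3 2 = P32 :> {mpoly R[3]}.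
Proof. rewrite /Tmn /Smn /P32 /mono; ring. Qed.
Lemma S5E : Sn R 5 = P5 :> {mpoly R[3]}.
Proof. rewrite /Sn /Smn /P5 /mono; ring. Qed.
Lemma US2E : U R * Sn R 2 = P311.
Proof. rewrite /U /Sn /Smn /P311 /mono; ring. Qed.
Lemma US11E : U R * Smn R 1 1 = P221.
Proof. rewrite /U /Smn /P221 /mono; ring. Qed.

Definition AA (t : R) := (4%:R * t ^+ 2 + 5%:R * t + 3%:R) / (t + 2%:R).
Definition BB (t : R) := (t - 1) ^+ 3 / (t + 2%:R).

Lemma eEE t : eE t = P41 - P32 - AA t *: (P311 - P221) + BB t *: P221.
Proof.
rewrite /eE /s1 /s2 /s3 /s4 T41E T32E US2E US11E /AA /BB.
congr (_ + _); congr (_ - _).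
by rewrite opprB addrA subrK.
Qed.

Lemma s4E : s4 R = P221.
Proof. exact: US11E. Qed.

Lemma mono5 a b c : (a + b + c = 5)%N -> mono a b c \is 5%N.-homog.
Proof. by move=> <-; exact: mono_homog. Qed.

Lemma P5_h : P5 \is 5%N.-homog.
Proof. by rewrite /P5 !rpredD // mono5. Qed.
Lemma P41_h : P41 \is 5%N.-homog.
Proof. by rewrite /P41 !rpredD // mono5. Qed.
Lemma P32_h : P32 \is 5%N.-homog.
Proof. by rewrite /P32 !rpredD // mono5. Qed.
Lemma P311_h : P311 \is 5%N.-homog.
Proof. by rewrite /P311 !rpredD // mono5. Qed.
Lemma P221_h : P221 \is 5%N.-homog.
Proof. by rewrite /P221 !rpredD // mono5. Qed.

Lemma sum3 (V : nmodType) (F : 'I_3 -> V) : \sum_i F i = F ia + F ib + F ic.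
Proof.
rewrite !big_ord_recl big_ord0 addr0 addrA.
by have [-> -> ->] : [/\ F ord0 = F ia, F (lift ord0 ord0) = F ib & F (lift ord0 (lift ord0 ord0)) = F ic]
  by split; congr F; apply/val_inj.
Qed.

Lemma prod3 (F : 'I_3 -> {mpoly R[3]}) : \prod_i F i = F ia * F ib * F ic.
Proof.
rewrite !big_ord_recl big_ord0 mulr1 mulrA.
by have [-> -> ->] : [/\ F ord0 = F ia, F (lift ord0 ord0) = F ib & F (lift ord0 (lift ord0 ord0)) = F ic]
  by split; congr F; apply/val_inj.
Qed.

Lemma msymXU (s : 'S_3) (i : 'I_3) : msym s ('X_i : {mpoly R[3]}) = 'X_(s i).
Proof.
rewrite msymX; congr 'X_[_]; apply/mnmP => j; rewrite mnmE !mnm1E.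
by rewrite -(inj_eq (@perm_inj _ s)) permKV.
Qed.

Definition psum k : {mpoly R[3]} := \sum_(i < 3) 'X_i ^+ k.
Definition eprod : {mpoly R[3]} := \prod_(i < 3) 'X_i.

Lemma psum_sym k : psum k \is symmetric.
Proof.
apply/issymP => s; rewrite /psum rmorph_sum /=.
under eq_bigr do rewrite rmorphXn /= msymXU.
by rewrite [RHS](reindex_inj (@perm_inj _ s)).
Qed.

Lemma eprod_sym : eprod \is symmetric.
Proof.
apply/issymP => s; rewrite /eprod rmorph_prod /=.
under eq_bigr do rewrite msymXU.
by rewrite [RHS](reindex_inj (@perm_inj _ s)).
Qed.

Lemma psumE k : psum k = va ^+ k + vb ^+ k + vc ^+ k.
Proof. by rewrite /psum sum3. Qed.
Lemma eprodE : eprod = va * vb * vc.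
Proof. by rewrite /eprod prod3. Qed.

Lemma P5_s : P5 \is symmetric.
Proof.
have -> : P5 = psum 5 by rewrite psumE /P5 /mono; ring.
exact: psum_sym.
Qed.
Lemma P41_s : P41 \is symmetric.
Proof.
have -> : P41 = psum 4 * psum 1 - psum 5 by rewrite !psumE /P41 /mono; ring.
by rewrite rpredB ?rpredM ?psum_sym.
Qed.
Lemma P32_s : P32 \is symmetric.
Proof.
have -> : P32 = psum 3 * psum 2 - psum 5 by rewrite !psumE /P32 /mono; ring.
by rewrite rpredB ?rpredM ?psum_sym.
Qed.
Lemma P311_s : P311 \is symmetric.
Proof.
have -> : P311 = eprod * psum 2 by rewrite !psumE eprodE /P311 /mono; ring.
by rewrite rpredM ?psum_sym ?eprod_sym.
Qed.
Lemma P221_s : P221 \is symmetric.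
Proof.
have E : 2%:R *: P221 = eprod * (psum 1 ^+ 2 - psum 2).
  by rewrite !psumE eprodE /P221 /mono -mul_mpolyC; ring.
have -> : P221 = 2%:R^-1 *: (eprod * (psum 1 ^+ 2 - psum 2)).
  by rewrite -E scalerA mulVf ?scale1r // pnatr_eq0.
by rewrite rpredZ // rpredM ?eprod_sym // rpredB ?rpredX ?psum_sym.
Qed.

End Aux.

Section Main.
Variable R : realType.
Implicit Types (u v w t : R).

Definition E5 u v w := u ^+ 5 + v ^+ 5 + w ^+ 5.
Definition E41 u v w := u ^+ 4 * v + u ^+ 4 * w + u * v ^+ 4 + v ^+ 4 * w + u * w ^+ 4 + v * w ^+ 4.
Definition E32 u v w := u ^+ 3 * v ^+ 2 + u ^+ 3 * w ^+ 2 + u ^+ 2 * v ^+ 3 + v ^+ 3 * w ^+ 2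
   + u ^+ 2 * w ^+ 3 + v ^+ 2 * w ^+ 3.
Definition E311 u v w := u ^+ 3 * v * w + u * v ^+ 3 * w + u * v * w ^+ 3.
Definition E221 u v w := u ^+ 2 * v ^+ 2 * w + u ^+ 2 * v * w ^+ 2 + u * v ^+ 2 * w ^+ 2.

Lemma ev_P5 (x : 'I_3 -> R) : (P5 R).@[x] = E5 (x ia) (x ib) (x ic).
Proof. by rewrite /P5 !mevalD !mono_eval /E5; ring. Qed.
Lemma ev_P41 (x : 'I_3 -> R) : (P41 R).@[x] = E41 (x ia) (x ib) (x ic).
Proof. by rewrite /P41 !mevalD !mono_eval /E41; ring. Qed.
Lemma ev_P32 (x : 'I_3 -> R) : (P32 R).@[x] = E32 (x ia) (x ib) (x ic).
Proof. by rewrite /P32 !mevalD !mono_eval /E32; ring. Qed.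
Lemma ev_P311 (x : 'I_3 -> R) : (P311 R).@[x] = E311 (x ia) (x ib) (x ic).
Proof. by rewrite /P311 !mevalD !mono_eval /E311; ring. Qed.
Lemma ev_P221 (x : 'I_3 -> R) : (P221 R).@[x] = E221 (x ia) (x ib) (x ic).
Proof. by rewrite /P221 !mevalD !mono_eval /E221; ring. Qed.

Lemma feval (f : {mpoly R[3]}) (Hf : Hs35 f) (x : 'I_3 -> R) :
  f.@[x] = f@_(mk3 5%N 0%N 0%N) * E5 (x ia) (x ib) (x ic)
         + f@_(mk3 4%N 1%N 0%N) * E41 (x ia) (x ib) (x ic)
         + f@_(mk3 3%N 2%N 0%N) * E32 (x ia) (x ib) (x ic)
         + f@_(mk3 3%N 1%N 1%N) * E311 (x ia) (x ib) (x ic)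
         + f@_(mk3 2%N 2%N 1%N) * E221 (x ia) (x ib) (x ic).
Proof.
by rewrite {1}(@decomp R f Hf) !mevalD !mevalZ ev_P5 ev_P41 ev_P32 ev_P311 ev_P221.
Qed.


Lemma eE_ev t (x : 'I_3 -> R) : (eE t).@[x] =
  E41 (x ia) (x ib) (x ic) - E32 (x ia) (x ib) (x ic)
  - AA t * (E311 (x ia) (x ib) (x ic) - E221 (x ia) (x ib) (x ic))
  + BB t * E221 (x ia) (x ib) (x ic).
Proof.
rewrite eEE; move: (ev_P41 x) (ev_P32 x) (ev_P311 x) (ev_P221 x).
move: (P41 R) (P32 R) (P311 R) (P221 R) => p1 p2 p3 p4 e1 e2 e3 e4.
by rewrite !mevalD !mevalN !mevalZ mevalB e1 e2 e3 e4.
Qed.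

Lemma eE_G t (x : 'I_3 -> R) : 0 <= t ->
  (t + 2%:R) * (eE t).@[x] = G t (x ia) (x ib) (x ic).
Proof.
move=> ht; rewrite eE_ev /AA /BB /G /Fp /E41 /E32 /E311 /E221.
field; lra.
Qed.

Lemma eE_Hs t : Hs35 (eE t).
Proof.
split; rewrite eEE.
- by rewrite rpredD ?rpredB ?rpredZ ?rpredB ?P41_s ?P32_s ?P311_s ?P221_s.
- by rewrite rpredD ?rpredB ?rpredZ ?rpredB ?P41_h ?P32_h ?P311_h ?P221_h.
Qed.

Lemma eE_P t : 7%:R <= t -> Ps35plus (eE t).
Proof.
move=> ht; split; first exact: eE_Hs.
move=> x hx.
have := Fnonneg ht (hx ia) (hx ib) (hx ic).
rewrite -eE_G; last lra.
rewrite pmulr_rge0 //; lra.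
Qed.

Lemma s4_P : Ps35plus (s4 R).
Proof.
rewrite s4E; split; first by split; [exact: P221_s | exact: P221_h].
move=> x hx; rewrite ev_P221 /E221.
have := hx ia; have := hx ib; have := hx ic => h1 h2 h3.
by rewrite !addr_ge0 // !mulr_ge0 // exprn_ge0.
Qed.


Ltac evk ev := rewrite ev /E5 /E41 /E32 /E311 /E221 /pt3 /=; ring.

Lemma part2 t (f : {mpoly R[3]}) : 7%:R <= t -> Ps35plus f ->
  f.@[pt3 t 1 1] = 0 -> f.@[pt3 0 1 1] = 0 -> f.@[pt3 0 0 1] = 0 ->
  exists l : R, 0 <= l /\ f = l *: eE t.
Proof.
move=> ht [Hf Hpos] H1 H2 H3.
have D := @decomp R f Hf; have ev := @feval f Hf.
move: D ev; move: (f@_(mk3 5%N 0%N 0%N)) (f@_(mk3 4%N 1%N 0%N)) (f@_(mk3 3%N 2%N 0%N))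
  (f@_(mk3 3%N 1%N 1%N)) (f@_(mk3 2%N 2%N 1%N)) => k0 k1 k2 k3 k4 D ev.
have e1 : f.@[pt3 0 0 1] = k0 by evk ev.
have e2 : f.@[pt3 0 1 1] = 2%:R * k0 + 2%:R * k1 + 2%:R * k2 by evk ev.
have e3 : f.@[pt3 0 2%:R 1] = 33%:R * k0 + 18%:R * k1 + 12%:R * k2 by evk ev.
have e4 : forall y, f.@[pt3 y 1 1] = k0 * (y ^+ 5 + 2%:R)
   + k1 * (2%:R * y ^+ 4 + 2%:R * y + 2%:R) + k2 * (2%:R * y ^+ 3 + 2%:R * y ^+ 2 + 2%:R)
   + k3 * (y ^+ 3 + 2%:R * y) + k4 * (2%:R * y ^+ 2 + y).
  by move=> y; evk ev.
have pt_ge0 : forall a b c, 0 <= a -> 0 <= b -> 0 <= c -> 0 <= f.@[pt3 a b c].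
  move=> a b c ha hb hc; apply: Hpos => i.
  by case: i => [[|[|[|//]]] Hi] /=.
have k00 : k0 = 0 by rewrite -e1.
have k2E : k2 = - k1 by move: H2; rewrite e2 k00; lra.
have k1p : 0 <= k1.
  have := pt_ge0 0 2%:R 1; rewrite e3 k00 k2E; lra.
pose Q := 2%:R * k1 * (t ^+ 3 - t ^+ 2 - t + 1) + k3 * (t ^+ 2 + 2%:R) + k4 * (2%:R * t + 1).
pose Dd := 2%:R * k1 * (3%:R * t ^+ 2 - 2%:R * t - 1) + 2%:R * k3 * t + 2%:R * k4.
pose Ee := 2%:R * k1 * (3%:R * t - 1) + k3.
have HQ : Q = 0.
  have : t * Q = 0 by rewrite -H1 e4 k00 k2E /Q; ring.
  move/eqP; rewrite mulf_eq0 => /orP [/eqP|/eqP] //; lra.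
have HD : Dd = 0.
  apply: (@dzero R Dd Ee (2%:R * k1)) => h h1 h2.
  have hpos : 0 <= f.@[pt3 (t + h) 1 1] by apply: pt_ge0; lra.
  rewrite e4 k00 k2E in hpos.
  have E : 0 * ((t + h) ^+ 5 + 2%:R) + k1 * (2%:R * (t + h) ^+ 4 + 2%:R * (t + h) + 2%:R) +
    - k1 * (2%:R * (t + h) ^+ 3 + 2%:R * (t + h) ^+ 2 + 2%:R) +
    k3 * ((t + h) ^+ 3 + 2%:R * (t + h)) + k4 * (2%:R * (t + h) ^+ 2 + (t + h))
    = (t + h) * (Q + (Dd * h + Ee * h ^+ 2 + 2%:R * k1 * h ^+ 3)).
    by rewrite /Q /Dd /Ee; ring.
  rewrite E HQ add0r pmulr_rge0 in hpos => //; lra.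
have tp : t + 2%:R != 0 by rewrite lt0r_neq0 //; lra.
have t1 : t - 1 != 0 by rewrite subr_eq0; apply/eqP; lra.
have k3E : k3 = - AA t * k1.
  have E : Q - (2%:R * t + 1) / 2%:R * Dd = - (t - 1) * ((t + 2%:R) * k3 + (4%:R * t ^+ 2 + 5%:R * t + 3%:R) * k1).
    by rewrite /Q /Dd; field.
  rewrite HQ HD mulr0 subr0 in E.
  move/eqP: E; rewrite eq_sym mulf_eq0 oppr_eq0 (negbTE t1) /= => /eqP E.
  move/eqP: E; rewrite addr_eq0 => /eqP E.
  by apply: (mulfI tp); rewrite E /AA; field.
have k4E : k4 = (AA t + BB t) * k1.
  have E : k4 = Dd / 2%:R - k1 * (3%:R * t ^+ 2 - 2%:R * t - 1) - k3 * t.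
    by rewrite /Dd; field.
  by rewrite E HD k3E /AA /BB; field.
exists k1; split => //.
rewrite D eEE k00 k2E k3E k4E.
move: (P5 R) (P41 R) (P32 R) (P311 R) (P221 R) (AA t) (BB t) => p0 p1 p2 p3 p4 A B.
rewrite -!mul_mpolyC !rmorphM !rmorphD !rmorphN rmorph0 /=.
move: (k1%:MP_[3]) (A%:MP_[3]) (B%:MP_[3]) => K1 A' B'.
ring.
Qed.

Lemma coefs (f : {mpoly R[3]}) : Hs35 f -> exists k0 k1 k2 k3 k4 : R,
  f = k0 *: P5 R + k1 *: P41 R + k2 *: P32 R + k3 *: P311 R + k4 *: P221 R /\
  forall x : 'I_3 -> R, f.@[x] = k0 * E5 (x ia) (x ib) (x ic)
         + k1 * E41 (x ia) (x ib) (x ic) + k2 * E32 (x ia) (x ib) (x ic)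
         + k3 * E311 (x ia) (x ib) (x ic) + k4 * E221 (x ia) (x ib) (x ic).
Proof.
move=> Hf; have D := @decomp R f Hf; have ev := @feval f Hf.
by do 5 eexists; split; [exact: D | exact: ev].
Qed.

Lemma dA_mono a b c : mderiv ia (mono R a b c) = a%:R *: mono R a.-1 b c.
Proof.
rewrite !monoE mderivX mk3a; congr (_ *: 'X_[_]); apply/mnmP; apply: ord3P;
by rewrite mnmBE !mnm1E ?mk3a ?mk3b ?mk3c /= ?subn0 ?subn1.
Qed.

Lemma dB_mono a b c : mderiv ib (mono R a b c) = b%:R *: mono R a b.-1 c.
Proof.
rewrite !monoE mderivX mk3b; congr (_ *: 'X_[_]); apply/mnmP; apply: ord3P;
by rewrite mnmBE !mnm1E ?mk3a ?mk3b ?mk3c /= ?subn0 ?subn1.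
Qed.

Lemma dA_ev k0 k1 k2 k3 k4 :
  (mderiv ia (k0 *: P5 R + k1 *: P41 R + k2 *: P32 R + k3 *: P311 R + k4 *: P221 R)).@[pt3 0 0 1] = k1.
Proof.
rewrite /P5 /P41 /P32 /P311 /P221 !mderivD !mderivZ !mderivD !dA_mono.
rewrite !(mevalD, mevalZ) !mono_eval /pt3 /=; ring.
Qed.

Lemma dBA_ev k0 k1 k2 k3 k4 :
  (mderiv ib (mderiv ia (k0 *: P5 R + k1 *: P41 R + k2 *: P32 R + k3 *: P311 R + k4 *: P221 R))).@[pt3 0 0 1] = k3.
Proof.
rewrite /P5 /P41 /P32 /P311 /P221 !(mderivD, mderivZ) !dA_mono !(mderivD, mderivZ) !dB_mono.
rewrite !(mevalD, mevalZ) !mono_eval /pt3 /=; ring.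
Qed.

Lemma pt_ge0 (f : {mpoly R[3]}) a b c : Ps35plus f -> 0 <= a -> 0 <= b -> 0 <= c ->
  0 <= f.@[pt3 a b c].
Proof.
move=> [_ Hpos] ha hb hc; apply: Hpos => i.
by case: i => [[|[|[|//]]] Hi] /=.
Qed.

Lemma part4 (f : {mpoly R[3]}) : Ps35plus f ->
  f.@[pt3 0 1 1] = 0 -> f.@[pt3 0 0 1] = 0 ->
  (mderiv ia f).@[pt3 0 0 1] = 0 ->
  (mderiv ib (mderiv ia f)).@[pt3 0 0 1] = 0 ->
  exists l : R, 0 <= l /\ f = l *: s4 R.
Proof.
move=> Pf H1 H2 H3 H4.
have [k0 [k1 [k2 [k3 [k4 [D ev]]]]]] := @coefs f Pf.1.
rewrite D dA_ev in H3; rewrite D dBA_ev in H4.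
have e1 : f.@[pt3 0 0 1] = k0 by evk ev.
have e2 : f.@[pt3 0 1 1] = 2%:R * k0 + 2%:R * k1 + 2%:R * k2 by evk ev.
have e5 : f.@[pt3 1 1 1] = 3%:R * k0 + 6%:R * k1 + 6%:R * k2 + 3%:R * k3 + 3%:R * k4 by evk ev.
have k00 : k0 = 0 by rewrite -e1.
have k20 : k2 = 0 by move: H1; rewrite e2 k00 H3; lra.
have k4p : 0 <= k4.
  have := pt_ge0 Pf ler01 ler01 ler01; rewrite e5 k00 k20 H3 H4; lra.
exists k4; split => //.
by rewrite D s4E k00 H3 k20 H4 !scale0r !add0r.
Qed.

Lemma s4_aux (g : {mpoly R[3]}) : Ps35plus g ->
  (forall a b c, 0 <= a -> 0 <= b -> 0 <= c -> g.@[pt3 a b c] <= (s4 R).@[pt3 a b c]) ->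
  exists k3 k4 : R, [/\ g = k3 *: P311 R + k4 *: P221 R, 0 <= k3 &
     forall a b c, g.@[pt3 a b c] = k3 * E311 a b c + k4 * E221 a b c].
Proof.
move=> Pg Hle.
have [k0 [k1 [k2 [k3 [k4 [D ev]]]]]] := @coefs g Pg.1.
have e1 : g.@[pt3 0 0 1] = k0 by evk ev.
have e2 : g.@[pt3 0 1 1] = 2%:R * k0 + 2%:R * k1 + 2%:R * k2 by evk ev.
have e3 : g.@[pt3 0 2%:R 1] = 33%:R * k0 + 18%:R * k1 + 12%:R * k2 by evk ev.
have z : forall b c, (s4 R).@[pt3 0 b c] = 0.
  by move=> b c; rewrite s4E ev_P221 /E221 /pt3 /=; ring.
have v0 : forall b c, 0 <= b -> 0 <= c -> g.@[pt3 0 b c] = 0.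
  move=> b c hb hc; apply/eqP; rewrite eq_le pt_ge0 // andbT.
  by have := Hle 0 b c (lexx 0) hb hc; rewrite z.
have k00 : k0 = 0 by rewrite -e1 v0 ?ler01.
have k12 : k1 + k2 = 0 by move: e2; rewrite v0 ?ler01 // k00; lra.
have k1e : 18%:R * k1 + 12%:R * k2 = 0.
  by move: e3; rewrite v0 ?ler01 // ?ler0n // k00; lra.
have k10 : k1 = 0 by lra.
have k20 : k2 = 0 by lra.
have ev' : forall a b c, g.@[pt3 a b c] = k3 * E311 a b c + k4 * E221 a b c.
  by move=> a b c; rewrite ev k00 k10 k20 /pt3 /=; ring.
exists k3, k4; split => //.
- by rewrite D k00 k10 k20 !scale0r !add0r.
- apply: (@pos0 R k3 k4) => x x0 x1.
  have := pt_ge0 Pg (ltW x0) (ltW x0) ler01.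
  by rewrite ev' /E311 /E221; congr (_ <= _); ring.
Qed.

Lemma part3 : extremal (@Ps35plus R) (s4 R).
Proof.
have v111 : (s4 R).@[pt3 1 1 1] = 3%:R by rewrite s4E ev_P221 /E221 /pt3 /=; ring.
split; first exact: s4_P.
  by move=> E0; move: v111; rewrite E0 meval0 => /eqP; rewrite eq_sym pnatr_eq0.
move=> g h Pg Ph Egh.
have Hg : forall a b c, 0 <= a -> 0 <= b -> 0 <= c -> g.@[pt3 a b c] <= (s4 R).@[pt3 a b c].
  by move=> a b c ha hb hc; rewrite Egh mevalD lerDl pt_ge0.
have Hh : forall a b c, 0 <= a -> 0 <= b -> 0 <= c -> h.@[pt3 a b c] <= (s4 R).@[pt3 a b c].
  by move=> a b c ha hb hc; rewrite Egh mevalD lerDr pt_ge0.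
have [k3 [k4 [Dg k3p evg]]] := s4_aux Pg Hg.
have [l3 [l4 [Dh l3p evh]]] := s4_aux Ph Hh.
have w1 : 3%:R * (k3 + l3) + 3%:R * (k4 + l4) = 3%:R.
  by rewrite -[RHS]v111 Egh mevalD evg evh /E311 /E221; ring.
have w2 : 36%:R * (k3 + l3) + 32%:R * (k4 + l4) = 32%:R.
  have v : (s4 R).@[pt3 2%:R 2%:R 1] = 32%:R by rewrite s4E ev_P221 /E221 /pt3 /=; ring.
  by rewrite -[RHS]v Egh mevalD evg evh /E311 /E221; ring.
have k30 : k3 = 0 by lra.
have l30 : l3 = 0 by lra.
have g111 : g.@[pt3 1 1 1] = 3%:R * k4 by rewrite evg /E311 /E221 k30; ring.
have h111 : h.@[pt3 1 1 1] = 3%:R * l4 by rewrite evh /E311 /E221 l30; ring.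
split.
- exists k4; split; first by have := pt_ge0 Pg ler01 ler01 ler01; rewrite g111; lra.
  by rewrite Dg k30 scale0r add0r s4E.
- exists l4; split; first by have := pt_ge0 Ph ler01 ler01 ler01; rewrite h111; lra.
  by rewrite Dh l30 scale0r add0r s4E.
Qed.

Lemma part1 t : 7%:R <= t -> extremal (@Ps35plus R) (eE t).
Proof.
move=> ht.
have tp : t + 2%:R != 0 by rewrite lt0r_neq0 //; lra.
have z1 : (eE t).@[pt3 t 1 1] = 0.
  by rewrite eE_ev /E41 /E32 /E311 /E221 /pt3 /= /AA /BB; field.
have z2 : (eE t).@[pt3 0 1 1] = 0.
  by rewrite eE_ev /E41 /E32 /E311 /E221 /pt3 /=; ring.
have z3 : (eE t).@[pt3 0 0 1] = 0.
  by rewrite eE_ev /E41 /E32 /E311 /E221 /pt3 /=; ring.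
have v : (eE t).@[pt3 0 2%:R 1] = 6%:R.
  by rewrite eE_ev /E41 /E32 /E311 /E221 /pt3 /=; ring.
split; first exact: eE_P.
  by move=> E0; move: v; rewrite E0 meval0 => /eqP; rewrite eq_sym pnatr_eq0.
move=> g h Pg Ph Egh.
have van : forall a b c, 0 <= a -> 0 <= b -> 0 <= c -> (eE t).@[pt3 a b c] = 0 ->
    g.@[pt3 a b c] = 0 /\ h.@[pt3 a b c] = 0.
  move=> a b c ha hb hc; rewrite Egh mevalD => E.
  have := pt_ge0 Pg ha hb hc; have := pt_ge0 Ph ha hb hc; lra.
have t0 : 0 <= t by lra.
have [g1 h1] := van _ _ _ t0 ler01 ler01 z1.
have [g2 h2] := van _ _ _ (lexx 0) ler01 ler01 z2.
have [g3 h3] := van _ _ _ (lexx 0) (lexx 0) ler01 z3.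
by split; apply: (part2 ht).
Qed.

End Main.

Unset Implicit Arguments.

Theorem theorem4p5 (R : realType) :
  [/\ (forall t : R, 7%:R <= t -> extremal (@Ps35plus R) (eE t)),
      (forall (t : R) (f : {mpoly R[3]}), 7%:R <= t -> Ps35plus f ->
         f.@[pt3 t 1 1] = 0 -> f.@[pt3 0 1 1] = 0 -> f.@[pt3 0 0 1] = 0 ->
         exists l : R, 0 <= l /\ f = l *: eE t),
      extremal (@Ps35plus R) (eE_inf R) &
      (forall f : {mpoly R[3]}, Ps35plus f ->
         f.@[pt3 0 1 1] = 0 -> f.@[pt3 0 0 1] = 0 ->
         (mderiv ia f).@[pt3 0 0 1] = 0 ->
         (mderiv ib (mderiv ia f)).@[pt3 0 0 1] = 0 ->
         exists l : R, 0 <= l /\ f = l *: s4 R)].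
Proof.
split.
- exact: part1.
- exact: part2.
- exact: part3.
- exact: part4.
Qed.
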